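(* Let $H$ be a finite connected graph. Then $H$ is $1$-guardable in every finite connected graph $G$ that contains $H$ as an isometric subgraph if and only if $H$ is a Helly graph.
   Context: All graphs are finite, simple and connected. $d_G(x,y)$ denotes the distance in $G$. A subgraph $H$ of $G$ is isometric if $d_H(x,y)=d_G(x,y)$ for all $x,y\in V(H)$. For $u\in V(G)$ and an integer $k\ge 0$, $N^k[u]=\{y\in V(G): d(u,y)\le k\}$. A family $\mathcal S$ of sets has the Helly property if for every subfamily $\mathcal T\subseteq\mathcal S$ whose members pairwise intersect, $\bigcap\mathcal T\neq\varnothing$. A graph is a Helly graph if the family $\{N^k[u]: u\in V(G), k\ge 0\}$ has the Helly property. Cops and robber game on $G$: the cops first choose starting vertices, then the robber chooses his; then they alternate turns, each player in his turn moving each of his pieces to an adjacent vertex or leaving it in place; the cops capture the robber when a cop occupies the robber's vertex. For an isometric subgraph $H$ of $G$ and $k\ge1$, $H$ is $k$-guardable (in $G$) if $k$ cops have a strategy such that after finitely many moves the $k$ cops are on vertices of $H$ and from then on always stay in $H$, and whenever the robber enters $H$ he is captured by one of these cops in the next turn. *)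

(* Defs.v *)
From mathcomp Require Import all_boot.
Set Implicit Arguments. Unset Strict Implicit. Unset Printing Implicit Defensive.

Section Graphs.
Variables (V : finType) (e : rel V).

Definition simple_graph : Prop := symmetric e /\ irreflexive e.

Definition connected_graph : Prop :=
  simple_graph /\ 0 < #|V| /\ forall x y : V, connect e x y.

Fixpoint ball (k : nat) (u : V) : {set V} :=
  match k with
  | 0 => [set u]
  | k'.+1 => ball k' u :|: [set y | [exists z in ball k' u, e z y]]
  end.

(* d(x,y) = least k with y in N^k[x]; in a connected graph it is < #|V|. *)
Definition dist (x y : V) : nat := find (fun k => y \in ball k x) (iota 0 #|V|).

Definition helly : Prop :=
  forall F : {set {set V}},
    (forall B, B \in F -> exists (u : V) (k : nat), B = ball k u) ->
    (forall B1 B2, B1 \in F -> B2 \in F -> exists x, (x \in B1) && (x \in B2)) ->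
    exists x, forall B, B \in F -> x \in B.

Definition adj_or_eq (x y : V) : bool := (x == y) || e x y.

(* Timeline of a play: c 0, r 0, c 1, r 1, ... (cop position c t, then robber r t). *)
Definition hist (c r : nat -> V) (t : nat) : seq (V * V) :=
  [seq (c s, r s) | s <- iota 0 t.+1].

(* the game is still running when the cop stands at c t (robber not yet moved) *)
Definition alive_c (c r : nat -> V) (t : nat) : Prop :=
  forall s, s < t -> c s <> r s /\ c s.+1 <> r s.

(* the game is still running after the robber's move to r t *)
Definition alive_r (c r : nat -> V) (t : nat) : Prop :=
  alive_c c r t /\ c t <> r t.

Definition guardable1 (S : {set V}) : Prop :=
  exists (c0 : V) (sigma : seq (V * V) -> V),
    forall c r : nat -> V,
      c 0 = c0 ->
      (forall t, c t.+1 = sigma (hist c r t)) ->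
      (forall t, adj_or_eq (r t) (r t.+1)) ->
      (forall t, alive_r c r t -> adj_or_eq (c t) (c t.+1)) /\
      exists T, forall t, T <= t ->
        (alive_c c r t -> c t \in S) /\
        (alive_r c r t -> r t \in S -> c t.+1 = r t).

End Graphs.

Definition isometric_embedding (VH VG : finType) (eH : rel VH) (eG : rel VG)
  (f : VH -> VG) : Prop :=
  injective f /\ (forall x y, eH x y -> eG (f x) (f y)) /\
  (forall x y, dist eG (f x) (f y) = dist eH x y).

(* Main.v *)
Require Import Defs.
From mathcomp Require Import all_boot zify.
From Stdlib Require Import Classical.
Set Implicit Arguments. Unset Strict Implicit. Unset Printing Implicit Defensive.

Section Dist.
Variables (V : finType) (e : rel V).

Lemma ball0 u : ball e 0 u = [set u]. Proof. by []. Qed.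
Lemma ballS k u : ball e k.+1 u = ball e k u :|: [set y | [exists z in ball e k u, e z y]].
Proof. by []. Qed.

Lemma ball_center k u : u \in ball e k u.
Proof. elim: k => [|k IH]; first by rewrite ball0 inE. by rewrite ballS inE IH. Qed.

Lemma ball_mono1 k u : ball e k u \subset ball e k.+1 u.
Proof. by rewrite ballS subsetUl. Qed.

Lemma ball_mono k k' u : k <= k' -> ball e k u \subset ball e k' u.
Proof.
elim: k' => [|k' IH]; first by rewrite leqn0 => /eqP ->.
rewrite leq_eqVlt => /orP [/eqP ->//|/IH h].
by apply: subset_trans h (ball_mono1 _ _).
Qed.

Lemma ball_step k u z y : z \in ball e k u -> e z y -> y \in ball e k.+1 u.
Proof. by move=> hz hzy; rewrite ballS !inE; apply/orP; right; apply/existsP; exists z; rewrite hz. Qed.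

Lemma ballSP k u y : y \in ball e k.+1 u -> y \in ball e k u \/ exists2 z, z \in ball e k u & e z y.
Proof.
rewrite ballS !inE => /orP [->|/existsP [z /andP [hz hzy]]]; first by left.
by right; exists z.
Qed.

Lemma ball_trans a b x y z : y \in ball e a x -> z \in ball e b y -> z \in ball e (a + b) x.
Proof.
move=> hy; elim: b z => [|b IH] z; first by rewrite ball0 inE addn0 => /eqP ->.
move/ballSP => [/IH h|[w /IH hw hwz]]; first by rewrite addnS; apply: (subsetP (ball_mono1 _ _)).
by rewrite addnS; apply: ball_step hw hwz.
Qed.

Lemma ball_edge x y : e x y -> y \in ball e 1 x.
Proof. by move=> h; apply: ball_step (ball_center 0 x) h. Qed.

Lemma ball_lip (phi : V -> nat) : (forall x y, e x y -> phi y <= phi x + 1) ->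
  forall k x y, y \in ball e k x -> phi y <= phi x + k.
Proof.
move=> hphi; elim=> [|k IH] x y; first by rewrite ball0 inE addn0 => /eqP ->.
move/ballSP => [/IH h|[z /IH hz /hphi hzy]]; first by lia.
by lia.
Qed.

Lemma ball_meet a b x y : y \in ball e (a + b) x -> exists w, (w \in ball e a x) && (y \in ball e b w).
Proof.
elim: b y => [|b IH] y; first by rewrite addn0 => hy; exists y; rewrite hy ball_center.
rewrite addnS => /ballSP [/IH [w /andP [h1 h2]]|[z /IH [w /andP [h1 h2]] hzy]].
  by exists w; rewrite h1 (subsetP (ball_mono1 _ _)).
by exists w; rewrite h1 (ball_step h2 hzy).
Qed.

Lemma connect_ball x y : connect e x y -> exists k, y \in ball e k x.
Proof.
move/connectP => [p hp ->] {y}.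
elim: p x hp => [|z p IH] x /=; first by exists 0; rewrite ball_center.
move=> /andP [hxz /IH [k hk]]; exists (1 + k).
by apply: ball_trans (ball_edge hxz) hk.
Qed.

Lemma dist_le_card x y : dist e x y <= #|V|.
Proof. by rewrite /dist; have := find_size (fun k => y \in ball e k x) (iota 0 #|V|); rewrite size_iota. Qed.

Hypothesis esym : symmetric e.

Lemma ball_sym k x y : y \in ball e k x -> x \in ball e k y.
Proof.
elim: k y => [|k IH] y; first by rewrite ball0 inE => /eqP ->; apply: ball_center.
move/ballSP => [/IH h|[z /IH hz hzy]]; first by apply: (subsetP (ball_mono1 _ _)).
have : z \in ball e 1 y by apply: ball_edge; rewrite esym.
by move=> h1; rewrite -add1n; apply: ball_trans h1 hz.
Qed.

Lemma ball_stable k u : ball e k u = ball e k.+1 u -> forall m, ball e (k + m) u = ball e k u.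
Proof.
move=> hk; elim=> [|m IH]; first by rewrite addn0.
by rewrite addnS ballS IH -ballS.
Qed.

Lemma ball_grow u k : (exists2 j, j < k & ball e j u = ball e j.+1 u) \/ k < #|ball e k u|.
Proof.
elim: k => [|k [[j hj hb]|IH]]; first by right; rewrite ball0 cards1.
- by left; exists j => //; apply: ltnW.
- case: (boolP (ball e k u == ball e k.+1 u)) => [/eqP hb|hne]; first by left; exists k.
  right; apply: leq_ltn_trans IH _; apply: proper_card.
  by rewrite properEneq hne ball_mono1.
Qed.

Lemma ball_max u k : ball e k u \subset ball e #|V|.-1 u.
Proof.
have [[j hj hb]|hc] := ball_grow u #|V|; last first.
  by have := max_card (mem (ball e #|V| u)); rewrite leqNgt hc.
have hst := ball_stable hb.
apply: (subset_trans (ball_mono u (leq_addl j k))); rewrite hst.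
by apply: ball_mono; move: hj; case: #|V|.
Qed.
Hypothesis hconn : forall x y : V, connect e x y.

Lemma ball_all x y : y \in ball e #|V|.-1 x.
Proof. have [k hk] := connect_ball (hconn x y); exact: subsetP (ball_max x k) _ hk. Qed.

Lemma dist_ball k x y : (dist e x y <= k) = (y \in ball e k x).
Proof.
have hn : 0 < #|V| by apply/card_gt0P; exists x.
have hhas : has (fun k => y \in ball e k x) (iota 0 #|V|).
  apply/hasP; exists #|V|.-1; last exact: ball_all.
  by rewrite mem_iota; lia.
have hlt : dist e x y < #|V| by have := hhas; rewrite has_find size_iota.
have hd : y \in ball e (dist e x y) x.
  by have := nth_find 0 hhas; rewrite nth_iota // -/(dist e x y).
apply/idP/idP => [hle|hk]; first exact: subsetP (ball_mono _ hle) _ hd.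
rewrite leqNgt; apply/negP => hlt2.
have := before_find 0 hlt2; rewrite nth_iota ?hk //.
by apply: ltn_trans hlt2 hlt.
Qed.

Lemma dist_refl x : dist e x x = 0.
Proof. by apply/eqP; rewrite -leqn0 dist_ball ball_center. Qed.

Lemma dist_eq0 x y : dist e x y = 0 -> x = y.
Proof. move=> h; have : dist e x y <= 0 by rewrite h.
by rewrite dist_ball ball0 inE => /eqP ->. Qed.

Lemma dist_sym x y : dist e x y = dist e y x.
Proof.
by apply/eqP; rewrite eqn_leq !dist_ball; apply/andP; split; apply: ball_sym; rewrite -dist_ball.
Qed.

Lemma dist_tri x y z : dist e x z <= dist e x y + dist e y z.
Proof.
by rewrite dist_ball; apply: ball_trans; rewrite -dist_ball.
Qed.

Lemma dist_edge x y : e x y -> dist e x y <= 1.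
Proof. by move=> h; rewrite dist_ball ball_edge. Qed.

Lemma dist_meet a b x y : dist e x y <= a + b -> exists w, (dist e x w <= a) && (dist e w y <= b).
Proof.
rewrite dist_ball => /ball_meet [w /andP [h1 h2]]; exists w.
by rewrite dist_ball h1 dist_ball.
Qed.

Lemma dist_lip (phi : V -> nat) : (forall x y, e x y -> phi y <= phi x + 1) ->
  forall x y, phi y <= phi x + dist e x y.
Proof. by move=> h x y; apply: ball_lip h _ _ _ _; rewrite -dist_ball. Qed.

End Dist.

Lemma ball_map (V V' : finType) (e : rel V) (e' : rel V') (f : V -> V') :
  (forall x y, e x y -> e' (f x) (f y)) ->
  forall k x y, y \in ball e k x -> f y \in ball e' k (f x).
Proof.
move=> hf; elim=> [|k IH] x y; first by rewrite !ball0 !inE => /eqP ->.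
move/ballSP => [/IH h|[z /IH hz hzy]]; first exact: (subsetP (ball_mono1 _ _ _)).
exact: ball_step hz (hf _ _ hzy).
Qed.

Lemma hist_size (V : finType) (c r : nat -> V) t : size (hist c r t) = t.+1.
Proof. by rewrite /hist size_map size_iota. Qed.

Lemma hist_last (V : finType) (c r : nat -> V) t d : last d (hist c r t) = (c t, r t).
Proof.
rewrite -nth_last hist_size /= /hist (nth_map 0) ?size_iota // nth_iota //.
Qed.

Lemma dist1_cases (V : finType) (e : rel V) (x w : V) : dist e x w <= 1 ->
  symmetric e -> (forall x y, connect e x y) -> x = w \/ e x w.
Proof.
move=> h hs hc; move: h; rewrite (dist_ball hc) => /ballSP [|[z]].
  by rewrite ball0 inE => /eqP ->; left.
by rewrite ball0 inE => /eqP ->; right.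
Qed.

Section HellyGuard.
Variables (VH : finType) (eH : rel VH) (VG : finType) (eG : rel VG) (f : VH -> VG).
Hypothesis HH : connected_graph eH.
Hypothesis HG : connected_graph eG.
Hypothesis Hf : isometric_embedding eH eG f.
Hypothesis Hh : helly eH.
Variable x0 : VH.

Let symH : symmetric eH := HH.1.1.
Let conH : forall x y, connect eH x y := HH.2.2.
Let symG : symmetric eG := HG.1.1.
Let conG : forall x y, connect eG x y := HG.2.2.
Let fiso x y : dist eG (f x) (f y) = dist eH x y := Hf.2.2 x y.
Let finj : injective f := Hf.1.

Definition K := #|VH|.
Definition kk t := maxn (K - t) 1.
Definition finv (c : VG) := odflt x0 [pick x | f x == c].
Lemma finvK x : finv (f x) = x.
Proof. by rewrite /finv; case: pickP => [y /eqP /finj ->|/(_ x)] //; rewrite eqxx. Qed.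

Definition rho (r : VG) (h : VH) t := maxn (kk t).-1 (dist eG r (f h)).
Definition Tset x r t := [set w | (dist eH x w <= 1) && [forall h, dist eH w h <= rho r h t]].
Definition next x r t := odflt x [pick w in Tset x r t].
Definition sigma (hs : seq (VG * VG)) :=
  let: (cc, rr) := last (f x0, f x0) hs in f (next (finv cc) rr (size hs).-1).

Lemma inter_balls a b u v : dist eH u v <= a + b ->
  exists w, (w \in ball eH a u) && (w \in ball eH b v).
Proof.
move/(dist_meet conH) => [w /andP [h1 h2]]; exists w.
by rewrite -!(dist_ball conH) h1 (dist_sym symH conH).
Qed.

Definition Inv x r t := forall h, dist eH x h <= maxn (kk t) (dist eG r (f h)).+1.

Lemma key x r t : Inv x r t -> exists w, w \in Tset x r t.
Proof.
move=> hI.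
pose F := ball eH 1 x |: [set ball eH (rho r h t) h | h in VH].
have hF1 : forall B, B \in F -> B = ball eH 1 x \/ exists h, B = ball eH (rho r h t) h.
  move=> B; rewrite !inE => /orP [/eqP ->|/imsetP [h _ ->]]; first by left.
  by right; exists h.
have hkk : 0 < kk t by rewrite /kk; lia.
have hxh : forall h, dist eH x h <= 1 + rho r h t.
  by move=> h; have := hI h; rewrite /rho; lia.
have hhh : forall h h', dist eH h h' <= rho r h t + rho r h' t.
  move=> h h'; rewrite -fiso; apply: leq_trans (dist_tri conG _ r _) _.
  by rewrite (dist_sym symG conG) /rho; lia.
have [w hw] : exists w, forall B, B \in F -> w \in B.
  apply: Hh.
    move=> B /hF1 [->|[h ->]]; first by exists x, 1.
    by exists h, (rho r h t).
  move=> B1 B2 /hF1 [->|[h1 ->]] /hF1 [->|[h2 ->]].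
  - by exists x; rewrite ball_center.
  - by apply: inter_balls.
  - by apply: inter_balls; rewrite (dist_sym symH conH) addnC.
  - by apply: inter_balls.
exists w; rewrite inE; apply/andP; split.
  by rewrite (dist_ball conH) hw // !inE eqxx.
apply/forallP => h; rewrite (dist_sym symH conH) (dist_ball conH) hw //.
by rewrite !inE; apply/orP; right; apply/imsetP; exists h.
Qed.

Lemma next_in x r t : Inv x r t -> next x r t \in Tset x r t.
Proof.
move=> /key [w hw]; rewrite /next; case: pickP => [y hy|/(_ w)] //=.
by rewrite hw.
Qed.

Lemma guard : guardable1 eG [set f x | x in VH].
Proof.
exists (f x0), sigma => c r hc0 hcS hr.
have hcS' : forall t, c t.+1 = f (next (finv (c t)) (r t) t).
  by move=> t; rewrite hcS /sigma hist_last hist_size.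
have hI : forall t, exists x, c t = f x /\ Inv x (r t) t.
  elim=> [|t [x [hx hIx]]].
    exists x0; split => // h; apply: leq_trans (dist_le_card _ _ _) _.
    by rewrite /kk /K; lia.
  exists (next x (r t) t); split; first by rewrite hcS' hx finvK.
  move=> h; have := next_in hIx; rewrite inE => /andP [_ /forallP /(_ h)].
  have : dist eG (r t) (f h) <= 1 + dist eG (r t.+1) (f h).
    apply: leq_trans (dist_tri conG _ (r t.+1) _) _.
    rewrite leq_add2r; have := hr t; rewrite /adj_or_eq => /orP [/eqP ->|/(dist_edge conG) -> //].
    by rewrite (dist_refl conG).
  by rewrite /rho /kk; lia.
split.
  move=> t _; have [x [hx hIx]] := hI t.
  have := next_in hIx; rewrite inE => /andP [/dist1_cases h _].
  rewrite hcS' hx finvK /adj_or_eq; case: (h symH conH) => [<-|he]; first by rewrite eqxx.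
  by rewrite Hf.2.1 // orbT.
exists K => t hKt; split.
  by move=> _; have [x [hx _]] := hI t; rewrite hx; apply/imsetP; exists x.
move=> _ /imsetP [h0 _ hr0]; have [x [hx hIx]] := hI t.
have := next_in hIx; rewrite inE => /andP [_ /forallP /(_ h0)].
rewrite /rho hr0 (dist_refl conG) /kk.
have -> : maxn (K - t) 1 = 1 by lia.
rewrite maxn0 leqn0 => /eqP /(dist_eq0 conH) heq.
by rewrite hcS' hx finvK hr0 heq.
Qed.

End HellyGuard.

Section Construction.
Variables (VH : finType) (eH : rel VH).
Hypothesis HH : connected_graph eH.
Let symH : symmetric eH := HH.1.1.
Let conH : forall x y, connect eH x y := HH.2.2.
Local Notation d := (dist eH).
Let dsym x y : d x y = d y x := dist_sym symH conH x y.
Let dtri x y z : d x z <= d x y + d y z := dist_tri conH x y z.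
Let drefl x : d x x = 0 := dist_refl conH x.
Let deq0 x y : d x y = 0 -> x = y := @dist_eq0 _ _ conH x y.
Let dcard x y : d x y <= #|VH| := dist_le_card eH x y.

Definition M := #|VH|.+2.
Definition lip (p : {ffun VH -> 'I_M.+1}) :=
  [forall x, forall y, (p x : nat) <= p y + dist eH x y].
Definition prof := {p : {ffun VH -> 'I_M.+1} | lip p}.
Definition pv (p : prof) (x : VH) : nat := val p x.

Lemma pv_lip (p : prof) x y : pv p x <= pv p y + d x y.
Proof. by have := valP p => /forallP /(_ x) /forallP /(_ y). Qed.
Lemma pv_le (p : prof) x : pv p x <= M.
Proof. by rewrite /pv -ltnS ltn_ord. Qed.
Lemma pv_inj (p q : prof) : (forall x, pv p x = pv q x) -> p = q.
Proof. by move=> h; apply: val_inj; apply/ffunP => x; apply: val_inj; apply: h. Qed.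

Lemma lip0 : lip [ffun _ => ord0].
Proof. by apply/forallP => x; apply/forallP => y; rewrite !ffunE. Qed.
Definition p0 : prof := Sub [ffun _ => ord0] lip0.

Definition mkp (g : VH -> nat) : prof := insubd p0 [ffun x => inord (g x)].
Lemma mkpE (g : VH -> nat) : (forall x, g x <= M) -> (forall x y, g x <= g y + d x y) ->
  forall x, pv (mkp g) x = g x.
Proof.
move=> hb hl x; rewrite /pv /mkp insubdK ?ffunE ?inordK ?ltnS //.
apply/forallP => y; apply/forallP => z; rewrite !ffunE !inordK ?ltnS //.
Qed.

Definition sd (p q : prof) := \max_(x : VH) maxn (pv p x - pv q x) (pv q x - pv p x).
Lemma sd_leP p q n : reflect (forall x, pv p x <= pv q x + n /\ pv q x <= pv p x + n) (sd p q <= n).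
Proof.
have hb := @bigmax_leqP VH xpredT n (fun x => maxn (pv p x - pv q x) (pv q x - pv p x)).
apply: (iffP hb) => h x; have := h x; first by move=> /(_ isT); lia.
by move=> hx _; lia.
Qed.
Lemma sd_ge p q x : pv p x <= pv q x + sd p q /\ pv q x <= pv p x + sd p q.
Proof. by move: x; apply/sd_leP. Qed.
Lemma sd_sym p q : sd p q = sd q p.
Proof.
apply/eqP; rewrite eqn_leq; apply/andP; split; apply/sd_leP => x.
  by have := sd_ge q p x; lia.
by have := sd_ge p q x; lia.
Qed.
Lemma sd_tri p q s : sd p s <= sd p q + sd q s.
Proof. by apply/sd_leP => x; have := sd_ge p q x; have := sd_ge q s x; lia. Qed.
Lemma sd_refl p : sd p p = 0.
Proof. by apply/eqP; rewrite -leqn0; apply/sd_leP => x; lia. Qed.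
Lemma sd_eq0 p q : sd p q = 0 -> p = q.
Proof. by move=> h; apply: pv_inj => x; have := sd_ge p q x; rewrite h; lia. Qed.

Definition iota_ h := mkp (d h).
Lemma iotaE h x : pv (iota_ h) x = d h x.
Proof.
apply: mkpE => [y|y z]; first by have := dcard h y; rewrite /M; lia.
by rewrite (dsym y z); apply: dtri.
Qed.
Lemma sd_iota a h : d a h <= sd (iota_ a) (iota_ h).
Proof. by have := sd_ge (iota_ a) (iota_ h) h; rewrite !iotaE drefl; lia. Qed.
Lemma iota_inj : injective iota_.
Proof.
move=> a b h; have := iotaE a a; rewrite h iotaE drefl; move/deq0; done.
Qed.

Definition step (p q : prof) :=
  let D := (sd p q).-1 in mkp (fun x => maxn (pv q x - D) (minn (pv p x) (pv q x + D))).
Lemma stepE p q x : pv (step p q) x =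
  maxn (pv q x - (sd p q).-1) (minn (pv p x) (pv q x + (sd p q).-1)).
Proof.
apply: mkpE => [y|y z]; first by have := pv_le p y; have := pv_le q y; lia.
by have := pv_lip p y z; have := pv_lip q y z; lia.
Qed.
Lemma step_close p q : sd p (step p q) <= 1.
Proof. by apply/sd_leP => x; rewrite stepE; have := sd_ge p q x; lia. Qed.
Lemma step_sd p q : sd (step p q) q <= (sd p q).-1.
Proof. by apply/sd_leP => x; rewrite stepE; lia. Qed.
Lemma step_neq p q : p != q -> step p q != p.
Proof.
move=> hne; apply/negP => /eqP h.
have := step_sd p q; rewrite h; have : sd p q != 0 by apply/negP => /eqP /sd_eq0 /eqP; rewrite (negbTE hne).
lia.
Qed.


Variable F : {set {set VH}}.
Hypothesis hFb : forall B, B \in F -> exists (u : VH) (k : nat), B = ball eH k u.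
Hypothesis hFp : forall B1 B2, B1 \in F -> B2 \in F -> exists x, (x \in B1) && (x \in B2).
Hypothesis hFn : forall x, exists2 B, B \in F & x \notin B.

Lemma ball_cap k u : ball eH k u = ball eH (minn k M) u.
Proof.
apply/setP => y; rewrite -!(dist_ball conH).
have := dcard u y; rewrite /M => hc; apply/idP/idP => h; lia.
Qed.

Definition Pset := [set uk : VH * 'I_M.+1 | ball eH uk.2 uk.1 \in F].
Definition fs x := \max_(uk in Pset) (d uk.1 x - uk.2).

Lemma Pset_ball B : B \in F -> exists2 uk, uk \in Pset & B = ball eH uk.2 uk.1.
Proof.
move=> /[dup] hB /hFb [u [k hk]].
have hm : minn k M < M.+1 by rewrite ltnS geq_minr.
exists (u, Ordinal hm); last by rewrite hk /= ball_cap.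
by rewrite inE /= -ball_cap -hk.
Qed.

Lemma Pset_pair uk uk' : uk \in Pset -> uk' \in Pset -> d uk.1 uk'.1 <= uk.2 + uk'.2.
Proof.
rewrite !inE => h1 h2; have [x /andP [hx1 hx2]] := hFp h1 h2.
move: hx1 hx2; rewrite -!(dist_ball conH) => hx1 hx2.
by apply: leq_trans (dtri _ x _) _; rewrite (dsym x); apply: leq_add.
Qed.

Lemma nonhelly x : exists2 uk, uk \in Pset & uk.2 < d uk.1 x.
Proof.
have [B hB hxB] := hFn x; have [uk huk hBuk] := Pset_ball hB.
exists uk => //; move: hxB; rewrite hBuk -(dist_ball conH); lia.
Qed.

Lemma Pset_pos uk : uk \in Pset -> 0 < uk.2.
Proof.
move=> huk; rewrite lt0n; apply/negP => /eqP h0.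
have [uk' huk' hlt] := nonhelly uk.1.
have := Pset_pair huk' huk; rewrite h0 addn0; lia.
Qed.

Lemma fs_lo uk x : uk \in Pset -> d uk.1 x <= fs x + uk.2.
Proof.
move=> huk; have : d uk.1 x - uk.2 <= fs x by rewrite /fs; exact: leq_bigmax_cond.
lia.
Qed.

Lemma fs_up uk x : uk \in Pset -> fs x <= d uk.1 x + uk.2.
Proof.
move=> huk; apply/bigmax_leqP => uk' huk'.
have := Pset_pair huk' huk; have := dtri uk'.1 uk.1 x; rewrite (dsym uk.1 x); lia.
Qed.

Lemma fs_lip x y : fs x <= fs y + d x y.
Proof.
apply/bigmax_leqP => uk huk.
have : d uk.1 y - uk.2 <= fs y by rewrite /fs; exact: leq_bigmax_cond.
have := dtri uk.1 y x; rewrite (dsym y x); lia.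
Qed.

Lemma fs_le x : fs x <= #|VH|.
Proof. apply/bigmax_leqP => uk _; have := dcard uk.1 x; lia. Qed.

Lemma fs_pos x : 0 < fs x.
Proof. have [uk huk hlt] := nonhelly x; have := fs_lo x huk; lia. Qed.


Definition l0 : 'I_4 := @Ordinal 4 0 isT.
Definition l1 : 'I_4 := @Ordinal 4 1 isT.
Definition l2 : 'I_4 := @Ordinal 4 2 isT.
Definition l3 : 'I_4 := @Ordinal 4 3 isT.
Lemma ord4_cases (z : 'I_4) : [\/ z = l0, z = l1, z = l2 | z = l3].
Proof.
case: z => [[|[|[|[|n]]]] hz] //.
- by apply: Or41; apply: val_inj.
- by apply: Or42; apply: val_inj.
- by apply: Or43; apply: val_inj.
- by apply: Or44; apply: val_inj.
Qed.

Definition ladj (a b : 'I_4) := (a.+1 %% 4 == b) || (b.+1 %% 4 == a).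
Definition VG := (prof * 'I_4)%type.
Definition eG (u v : VG) :=
  ((u.1 == v.1) && ladj u.2 v.2) || ((u.2 == v.2) && (u.1 != v.1) && (sd u.1 v.1 <= 1)).
Definition fG h : VG := (iota_ h, l0).

Lemma ladj_sym : symmetric ladj.
Proof. by move=> a b; rewrite /ladj orbC. Qed.
Lemma ladj_irr a : ladj a a = false.
Proof. by case: (ord4_cases a) => ->. Qed.

Lemma eG_sym : symmetric eG.
Proof. by move=> u v; rewrite /eG eq_sym ladj_sym sd_sym [v.2 == _]eq_sym [v.1 == _]eq_sym. Qed.
Lemma eG_irr : irreflexive eG.
Proof. by move=> u; rewrite /eG !eqxx ladj_irr. Qed.

Lemma conn_layer p q z : connect eG (p, z) (q, z).
Proof.
move: {2}(sd p q) (leqnn (sd p q)) => n; elim: n p => [|n IH] p hn.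
  by move: hn; rewrite leqn0 => /eqP /sd_eq0 ->; apply: connect0.
case: (eqVneq p q) => [->|hne]; first by apply: connect0.
apply: connect_trans (IH (step p q) _); last by have := step_sd p q; lia.
apply: connect1; rewrite /eG /= eqxx step_close eq_sym step_neq //.
by rewrite orbT.
Qed.

Lemma conn_vert p z : connect eG (p, z) (p, l0).
Proof.
have e10 : eG (p, l1) (p, l0) by rewrite /eG eqxx.
have e21 : eG (p, l2) (p, l1) by rewrite /eG eqxx.
have e30 : eG (p, l3) (p, l0) by rewrite /eG eqxx.
case: (ord4_cases z) => ->; first exact: connect0.
- exact: connect1.
- exact: connect_trans (connect1 e21) (connect1 e10).
- exact: connect1.
Qed.

Lemma eG_conn x y : connect eG x y.
Proof.
case: x y => [p a] [q b].
apply: connect_trans (conn_vert p a) _.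
apply: connect_trans (conn_layer p q l0) _.
by rewrite (sym_connect_sym eG_sym); apply: conn_vert.
Qed.

Lemma G_connected : connected_graph eG.
Proof.
split; first by split; [exact: eG_sym|exact: eG_irr].
split; last exact: eG_conn.
by apply/card_gt0P; exists (p0, l0).
Qed.

Lemma fG_edge x y : eH x y -> eG (fG x) (fG y).
Proof.
move=> hxy; rewrite /eG /= ?eqxx /=; apply/orP; right.
have hne : x != y by apply/negP => /eqP hh; move: hxy; rewrite hh HH.1.2.
rewrite (inj_eq iota_inj) hne /=; apply/sd_leP => z; rewrite !iotaE.
have h1 := dist_edge conH hxy; have := dtri x y z; have := dtri y x z.
rewrite (dsym y x); lia.
Qed.

Lemma fG_iso : isometric_embedding eH eG fG.
Proof.
split; first by move=> a b [] /iota_inj.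
split; first exact: fG_edge.
move=> x y; apply/eqP; rewrite eqn_leq; apply/andP; split.
  rewrite (dist_ball eG_conn); apply: ball_map; first exact: fG_edge.
  by rewrite -(dist_ball conH).
pose phi (v : VG) := pv v.1 x.
have hphi : forall u v, eG u v -> phi v <= phi u + 1.
  move=> u v; rewrite /phi /eG => /orP [/andP [/eqP -> _]|/andP [_ /sd_leP h]].
    by rewrite addn1.
  by have := h x; lia.
have := dist_lip eG_conn hphi (fG x) (fG y); rewrite /phi /= !iotaE drefl add0n.
by rewrite dsym.
Qed.


Definition Wp := mkp (fun x => (fs x).+1).
Lemma WpE x : pv Wp x = (fs x).+1.
Proof.
apply: mkpE => [y|y z]; first by have := fs_le y; rewrite /M; lia.
by have := fs_lip y z; lia.
Qed.
Definition gp (q : prof) := mkp (fun x => maxn (fs x) (2 - pv q x)).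
Lemma gpE q x : pv (gp q) x = maxn (fs x) (2 - pv q x).
Proof.
apply: mkpE => [y|y z]; first by have := fs_le y; rewrite /M; lia.
by have := fs_lip y z; have := pv_lip q z y; rewrite (dsym z y); lia.
Qed.

Definition valid (p q : prof) h := sd p (iota_ h) < pv q h.
Definition attack (p q : prof) : option prof :=
  match [pick h | valid p q h] with
  | Some h0 => Some (step p (iota_ [arg min_(h < h0 | valid p q h) sd p (iota_ h)]))
  | None => None
  end.

Lemma attack_spec p q h : valid p q h ->
  exists h', [/\ valid p q h', sd p (iota_ h') <= sd p (iota_ h) & attack p q = Some (step p (iota_ h'))].
Proof.
move=> hv; rewrite /attack; case: pickP => [h0 hv0|/(_ h)]; last by rewrite hv.
case: arg_minnP => // h' hv' hmin; exists h'; split => //; exact: hmin.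
Qed.

Lemma attack_none p q h : attack p q = None -> ~~ valid p q h.
Proof. by rewrite /attack; case: pickP => // /(_ h) ->. Qed.

Definition plan (r c : VG) : VG :=
  let p := r.1 in let z := r.2 in let q := c.1 in
  if z == l0 then
    match attack p q with
    | Some p' => (p', l0)
    | None => if p == Wp then (gp q, l0) else (p, l1)
    end
  else if z == l1 then (p, l2)
  else if z == l2 then (if p == Wp then (Wp, l3) else (step p Wp, l2))
  else (if p == Wp then (Wp, l0) else (p, l2)).

Definition aoe := adj_or_eq eG.
Definition safe c v := ~~ aoe c v.
Definition lup (z : 'I_4) : 'I_4 := Ordinal (ltn_pmod z.+1 (isT : 0 < 4)).
Definition ldn (z : 'I_4) : 'I_4 := Ordinal (ltn_pmod (z + 3) (isT : 0 < 4)).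

Definition Rob (r c : VG) : VG :=
  let pl := plan r c in
  if aoe r pl && safe c pl then pl
  else if safe c (r.1, lup r.2) then (r.1, lup r.2)
  else if safe c (r.1, ldn r.2) then (r.1, ldn r.2) else r.
Definition R0 (c : VG) : VG := (c.1, Ordinal (ltn_pmod (c.2 + 2) (isT : 0 < 4))).

Lemma aoeE p a q b : aoe (p, a) (q, b) = ((a == b) && (sd p q <= 1)) || ((p == q) && ladj a b).
Proof.
rewrite /aoe /adj_or_eq /eG /= xpair_eqE.
case: (eqVneq p q) => [->|hne]; case: (a == b); rewrite /= ?sd_refl ?eqxx /= ?orbF ?andbT ?andbF ?orbT //.
Qed.

Lemma rob_adj r c : aoe r (Rob r c).
Proof.
case: r => p z; rewrite /Rob.
case: ifP => [/andP [] //|_].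
case: ifP => _; first by rewrite aoeE eqxx /=; case: (ord4_cases z) => ->; rewrite orbT.
case: ifP => _; first by rewrite aoeE eqxx /=; case: (ord4_cases z) => ->; rewrite orbT.
by rewrite /aoe /adj_or_eq eqxx.
Qed.

Lemma nodom r c : c != r -> safe c (Rob r c).
Proof.
move=> hne; rewrite /Rob; case: ifP => [/andP [] //|_].
case: ifP => // /negbFE hu; case: ifP => // /negbFE hd.
move: hne hu hd; case: r => p z; case: c => q w /=.
rewrite /safe !aoeE xpair_eqE.
case: (eqVneq q p) => [->|hqp] /=.
  rewrite !sd_refl /= ?andbT.
  by case: (ord4_cases z) => ->; case: (ord4_cases w) => ->.
rewrite ?andbF ?orbF.
by case: (ord4_cases z) => ->; case: (ord4_cases w) => ->.
Qed.

Lemma R0_safe c : safe c (R0 c).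
Proof.
case: c => q w; rewrite /safe /R0 aoeE /= eqxx /=.
by case: (ord4_cases w) => ->.
Qed.

Lemma plan_l0_some p c p' : attack p c.1 = Some p' -> plan (p, l0) c = (p', l0).
Proof. by move=> h; rewrite /plan /= h. Qed.
Lemma plan_l0_W c : attack Wp c.1 = None -> plan (Wp, l0) c = (gp c.1, l0).
Proof. by move=> h; rewrite /plan /= h eqxx. Qed.
Lemma plan_l0_up p c : attack p c.1 = None -> p != Wp -> plan (p, l0) c = (p, l1).
Proof. by move=> h hp; rewrite /plan /= h (negbTE hp). Qed.
Lemma plan_l1 p c : plan (p, l1) c = (p, l2).
Proof. by []. Qed.
Lemma plan_l2W c : plan (Wp, l2) c = (Wp, l3).
Proof. by rewrite /plan /= eqxx. Qed.
Lemma plan_l2 p c : p != Wp -> plan (p, l2) c = (step p Wp, l2).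
Proof. by move=> hp; rewrite /plan /= (negbTE hp). Qed.
Lemma plan_l3W c : plan (Wp, l3) c = (Wp, l0).
Proof. by rewrite /plan /= eqxx. Qed.
Lemma plan_l3 p c : p != Wp -> plan (p, l3) c = (p, l2).
Proof. by move=> hp; rewrite /plan /= (negbTE hp). Qed.

Lemma hist_rcons (c r : nat -> VG) t : hist c r t.+1 = rcons (hist c r t) (c t.+1, r t.+1).
Proof. by rewrite /hist -(addn1 t.+1) iotaD map_cat cats1 add0n. Qed.


Lemma attack_some p q p' : attack p q = Some p' -> exists h, valid p q h.
Proof. by rewrite /attack; case: pickP => // h0 hv0 _; exists h0. Qed.

Lemma safe_neq c v : safe c v -> c <> v.
Proof. by rewrite /safe /aoe /adj_or_eq => /norP [/eqP h _]. Qed.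

Lemma sd_iota_p a (p : prof) : pv p a <= sd (iota_ a) p.
Proof. by have := sd_ge (iota_ a) p a; rewrite iotaE drefl; lia. Qed.
Lemma safe_l0 a p : 1 < sd (iota_ a) p -> safe (fG a) (p, l0).
Proof. by rewrite /safe /fG aoeE eqxx ladj_irr andbF orbF /= -ltnNge. Qed.
Lemma safe_l0' a p : 1 < pv p a -> safe (fG a) (p, l0).
Proof. by move=> h; apply: safe_l0; apply: leq_trans h (sd_iota_p _ _). Qed.
Lemma safe_l2 a p : safe (fG a) (p, l2).
Proof. by rewrite /safe /fG aoeE /= ?andbF. Qed.
Lemma safe_l1 a p : p != iota_ a -> safe (fG a) (p, l1).
Proof. by rewrite /safe /fG aoeE /= eq_sym => /negbTE ->. Qed.
Lemma safe_l3 a p : p != iota_ a -> safe (fG a) (p, l3).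
Proof. by rewrite /safe /fG aoeE /= eq_sym => /negbTE ->. Qed.
Lemma Wp_far a : 1 < pv Wp a.
Proof. by rewrite WpE; have := fs_pos a; lia. Qed.
Lemma Wp_neq a : Wp != iota_ a.
Proof. apply/negP => /eqP h; have := Wp_far a; rewrite h iotaE drefl. done. Qed.

Section Game.
Variables (c0 : VG) (sigma : seq (VG * VG) -> VG).
Let S := [set fG x | x in VH].
Hypothesis Hg : forall c r : nat -> VG, c 0 = c0 -> (forall t, c t.+1 = sigma (hist c r t)) ->
  (forall t, adj_or_eq eG (r t) (r t.+1)) ->
  (forall t, alive_r c r t -> adj_or_eq eG (c t) (c t.+1)) /\
  exists T, forall t, T <= t ->
    (alive_c c r t -> c t \in S) /\ (alive_r c r t -> r t \in S -> c t.+1 = r t).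

Fixpoint st t : seq (VG * VG) :=
  match t with
  | 0 => [:: (c0, R0 c0)]
  | t'.+1 => let s := st t' in let cn := sigma s in rcons s (cn, Rob (last (c0, c0) s).2 cn)
  end.
Definition cc t := (last (c0, c0) (st t)).1.
Definition rr t := (last (c0, c0) (st t)).2.

Lemma hist_st t : hist cc rr t = st t.
Proof.
elim: t => [|t IH]; first by [].
by rewrite hist_rcons IH /cc /rr /= last_rcons.
Qed.
Lemma cc0 : cc 0 = c0. Proof. by []. Qed.
Lemma rr0 : rr 0 = R0 c0. Proof. by []. Qed.
Lemma ccS t : cc t.+1 = sigma (hist cc rr t).
Proof. by rewrite hist_st /cc /= last_rcons. Qed.
Lemma rrS t : rr t.+1 = Rob (rr t) (cc t.+1).
Proof. by rewrite /rr /cc /= !last_rcons. Qed.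
Lemma take_plan t : aoe (rr t) (plan (rr t) (cc t.+1)) -> safe (cc t.+1) (plan (rr t) (cc t.+1)) ->
  rr t.+1 = plan (rr t) (cc t.+1).
Proof. by move=> h1 h2; rewrite rrS /Rob h1 h2. Qed.

Section Phases.
Variable T : nat.
Hypothesis conf : forall t, T <= t -> exists a, cc t = fG a.
Hypothesis notin : forall t a, T <= t -> rr t <> fG a.
Hypothesis copm : forall t a b, T <= t -> cc t = fG a -> cc t.+1 = fG b -> d a b <= 1.

Lemma attack_move t p a h' : T <= t -> rr t = (p, l0) -> cc t.+1 = fG a ->
  valid p (iota_ a) h' -> attack p (iota_ a) = Some (step p (iota_ h')) ->
  rr t.+1 = (step p (iota_ h'), l0) /\ 0 < sd p (iota_ h').
Proof.
move=> hT hr ha hv hatt.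
have hpos : 0 < sd p (iota_ h').
  rewrite lt0n; apply/negP => /eqP /sd_eq0 hp; apply: (@notin t h' hT); by rewrite hr hp.
split => //.
have hpl : plan (rr t) (cc t.+1) = (step p (iota_ h'), l0) by rewrite hr ha (@plan_l0_some _ (fG a) _ hatt).
rewrite take_plan hpl //; first by rewrite hr aoeE eqxx step_close.
rewrite ha; apply: safe_l0; rewrite ltnNge; apply/negP => hle.
have := sd_iota a h'; have := sd_tri (iota_ a) (step p (iota_ h')) (iota_ h').
have := step_sd p (iota_ h'); move: hv; rewrite /valid iotaE; lia.
Qed.

Lemma attack_ok m : forall t p, T <= t -> rr t = (p, l0) ->
  (forall a, cc t.+1 = fG a -> exists h, valid p (iota_ a) h && (sd p (iota_ h) <= m)) -> False.
Proof.
elim: m => [|m IH] t p hT hr hv; have [a ha] := conf (leqW hT);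
  have [h /andP [hval hm]] := hv a ha; have [h' [hv' hle hatt]] := attack_spec hval;
  have [hr1 hpos] := attack_move hT hr ha hv' hatt.
  by move: hpos; lia.
apply: (IH t.+1 (step p (iota_ h'))) => // [|a'' ha'']; first by lia.
exists h'; apply/andP; split; last by have := step_sd p (iota_ h'); lia.
have := copm (leqW hT) ha ha''; have := dtri a a'' h'; have := step_sd p (iota_ h').
move: hv'; rewrite /valid !iotaE; lia.
Qed.

Lemma W_ok t : T <= t -> rr t = (Wp, l0) -> False.
Proof.
move=> hT hr; have [a ha] := conf (leqW hT).
case hatt: (attack Wp (iota_ a)) => [p'|].
  have [h hv] := attack_some hatt.
  apply: (attack_ok (m := sd Wp (iota_ h)) hT hr) => a' ha'.
  have ea : a' = a by apply: (fG_iso.1); rewrite -ha -ha'.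
  by exists h; rewrite ea hv leqnn.
have hpl : plan (rr t) (cc t.+1) = (gp (iota_ a), l0) by rewrite hr ha plan_l0_W.
have hr1 : rr t.+1 = (gp (iota_ a), l0).
  rewrite take_plan hpl //.
    rewrite hr aoeE eqxx /=; apply/orP; left; apply/sd_leP => x; rewrite WpE gpE iotaE.
    by have := fs_pos a; have := fs_lip a x; lia.
  by rewrite ha; apply: safe_l0'; rewrite gpE iotaE drefl; lia.
apply: (attack_ok (m := M) (leqW hT) hr1) => a'' ha''.
have [uk huk hlt] := nonhelly a''; have hk := Pset_pos huk.
exists uk.1; apply/andP; split; last first.
  apply: (@leq_trans uk.2); last by rewrite -ltnS ltn_ord.
  apply/sd_leP => x; rewrite gpE !iotaE.
  have := fs_up x huk; have := fs_lo x huk.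
  have hah : 0 < d a uk.1.
    rewrite lt0n; apply/negP => /eqP /deq0 hau.
    have := copm (leqW hT) ha ha''; rewrite hau; lia.
  have := dtri a x uk.1; rewrite (dsym x uk.1); lia.
rewrite /valid iotaE (dsym a''); apply: (leq_ltn_trans _ hlt).
apply/sd_leP => x; rewrite gpE !iotaE.
have := fs_up x huk; have := fs_lo x huk.
have hah : 0 < d a uk.1.
  rewrite lt0n; apply/negP => /eqP /deq0 hau.
  have := copm (leqW hT) ha ha''; rewrite hau; lia.
have := dtri a x uk.1; rewrite (dsym x uk.1); lia.
Qed.

Lemma take_plan' t v : plan (rr t) (cc t.+1) = v -> aoe (rr t) v -> safe (cc t.+1) v -> rr t.+1 = v.
Proof. by move=> h1; rewrite -h1 => h2 h3; apply: take_plan. Qed.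

Lemma l23_ok t : T <= t -> rr t = (Wp, l2) -> False.
Proof.
move=> hT hr; have [a ha] := conf (leqW hT).
have hr1 : rr t.+1 = (Wp, l3).
  apply: take_plan'; first by rewrite hr plan_l2W.
    by rewrite hr aoeE eqxx /= ?orbT.
  by rewrite ha; apply: safe_l3; apply: Wp_neq.
have [a' ha'] := conf (leqW (leqW hT)).
have hr2 : rr t.+2 = (Wp, l0).
  apply: take_plan'; first by rewrite hr1 plan_l3W.
    by rewrite hr1 aoeE eqxx /= ?orbT.
  by rewrite ha'; apply: safe_l0'; apply: Wp_far.
exact: (W_ok (leqW (leqW hT)) hr2).
Qed.

Lemma L2_ok n : forall t p, T <= t -> rr t = (p, l2) -> sd p Wp <= n -> False.
Proof.
elim: n => [|n IH] t p hT hr hn; case: (eqVneq p Wp) => [hp|hp].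
- by rewrite hp in hr; apply: (l23_ok hT hr).
- by move: hn; rewrite leqn0 => /eqP /sd_eq0 /eqP; rewrite (negbTE hp).
- by rewrite hp in hr; apply: (l23_ok hT hr).
have [a ha] := conf (leqW hT).
have hr1 : rr t.+1 = (step p Wp, l2).
  apply: take_plan'; first by rewrite hr (plan_l2 _ hp).
    by rewrite hr aoeE eqxx step_close.
  by rewrite ha; apply: safe_l2.
apply: (IH t.+1 (step p Wp) (leqW hT) hr1).
by have := step_sd p Wp; lia.
Qed.

Lemma L3_ok t p : T <= t -> rr t = (p, l3) -> False.
Proof.
move=> hT hr; have [a ha] := conf (leqW hT); case: (eqVneq p Wp) => [hp|hp].
  rewrite hp in hr.
  have hr1 : rr t.+1 = (Wp, l0).
    apply: take_plan'; first by rewrite hr plan_l3W.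
      by rewrite hr aoeE eqxx /= ?orbT.
    by rewrite ha; apply: safe_l0'; apply: Wp_far.
  exact: (W_ok (leqW hT) hr1).
have hr1 : rr t.+1 = (p, l2).
  apply: take_plan'; first by rewrite hr (plan_l3 _ hp).
    by rewrite hr aoeE eqxx /= ?orbT.
  by rewrite ha; apply: safe_l2.
exact: (L2_ok (leqW hT) hr1 (leqnn _)).
Qed.

Lemma L1_ok t p : T <= t -> rr t = (p, l1) -> False.
Proof.
move=> hT hr; have [a ha] := conf (leqW hT).
have hr1 : rr t.+1 = (p, l2).
  apply: take_plan'; first by rewrite hr plan_l1.
    by rewrite hr aoeE eqxx /= ?orbT.
  by rewrite ha; apply: safe_l2.
exact: (L2_ok (leqW hT) hr1 (leqnn _)).
Qed.

Lemma L0_ok t p : T <= t -> rr t = (p, l0) -> False.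
Proof.
move=> hT hr; have [a ha] := conf (leqW hT).
case hatt: (attack p (iota_ a)) => [p'|].
  have [h hv] := attack_some hatt.
  apply: (attack_ok (m := sd p (iota_ h)) hT hr) => a' ha'.
  have ea : a' = a by apply: (fG_iso.1); rewrite -ha -ha'.
  by exists h; rewrite ea hv leqnn.
case: (eqVneq p Wp) => [hp|hp]; first by rewrite hp in hr; exact: W_ok hT hr.
have hr1 : rr t.+1 = (p, l1).
  apply: take_plan'; first by rewrite hr ha (@plan_l0_up _ (fG a) hatt hp).
    by rewrite hr aoeE eqxx /= ?orbT.
  rewrite ha; apply: safe_l1; apply/negP => /eqP hpa; apply: (@notin t a hT); by rewrite hr hpa.
exact: (L1_ok (leqW hT) hr1).
Qed.

Lemma all_ok : False.
Proof.
case hr: (rr T) => [p z].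
by case: (ord4_cases z) => hz; rewrite hz in hr;
  [exact: (L0_ok (leqnn T) hr)|exact: (L1_ok (leqnn T) hr)|
   exact: (L2_ok (leqnn T) hr (leqnn _))|exact: (L3_ok (leqnn T) hr)].
Qed.

End Phases.

Lemma game_false : False.
Proof.
have radj : forall t, adj_or_eq eG (rr t) (rr t.+1) by move=> t; rewrite rrS; apply: rob_adj.
have [Hleg [T HT]] := Hg cc0 ccS radj.
have surv : forall t, safe (cc t) (rr t) /\ alive_r cc rr t.
  elim => [|t [hs [ha hne]]].
    have hs : safe (cc 0) (rr 0) by rewrite cc0 rr0 R0_safe.
    by split => //; split; [move=> s|exact: safe_neq].
  have hm := Hleg t (conj ha hne).
  have hne1 : cc t.+1 != rr t.
    apply/negP => /eqP heq; move: hs; rewrite /safe -heq; rewrite /aoe hm. done.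
  have hs1 : safe (cc t.+1) (rr t.+1) by rewrite rrS; apply: nodom.
  split => //; split; last exact: safe_neq.
  move=> s; rewrite ltnS leq_eqVlt => /orP [/eqP ->|/ha //].
  by split => // /eqP; rewrite (negbTE hne1).
apply: (all_ok (T := T)).
- move=> t hT; have := (HT t hT).1 (surv t).2.1 => /imsetP [a _ ->]; by exists a.
- move=> t a hT hra; have h2 := (HT t hT).2 (surv t).2.
  have : rr t \in S by rewrite hra; apply/imsetP; exists a.
  move/h2 => heq; have := (surv t.+1).2.1 t (ltnSn t); rewrite heq; by case.
- move=> t a b hT ha hb; have := Hleg t (surv t).2; rewrite ha hb.
  rewrite -/aoe /fG aoeE eqxx ladj_irr andbF orbF /= => hsd.
  by apply: leq_trans (sd_iota a b) hsd.
Qed.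

End Game.

End Construction.

Theorem theorem2p5 (VH : finType) (eH : rel VH) (HH : connected_graph eH) :
  (forall (VG : finType) (eG : rel VG) (f : VH -> VG),
      connected_graph eG -> isometric_embedding eH eG f ->
      guardable1 eG [set f x | x in VH])
  <-> helly eH.
Proof.
split.
  move=> hall; apply: NNPP => hnh.
  have [F hF] := not_all_ex_not _ _ hnh.
  have [hFb hF'] := imply_to_and _ _ hF.
  have [hFp hnc] := imply_to_and _ _ hF'.
  have hFn : forall x, exists2 B, B \in F & x \notin B.
    move=> x; case/boolP: [forall B in F, x \in B] => [/forallP h|/forallPn [B]].
      by exfalso; apply: hnc; exists x => B hB; have := h B; rewrite hB.
    by rewrite negb_imply => /andP [hB hx]; exists B.
  have [c0 [sigma Hg]] := hall _ _ _ (G_connected eH) (fG_iso HH).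
  exact: (game_false HH hFb hFp hFn Hg).
move=> hh VG eG f HG Hf.
have /card_gt0P [x0 _] := HH.2.1.
exact: (guard HH HG Hf hh x0).
Qed.
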